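(* Assume (A1)–(A2) and fix $K\ge1$. Let $v,w:[0,\infty)\times\mathbb{Z}\to\mathbb{R}$, $(t,i)\mapsto v_i(t),w_i(t)$, be continuously differentiable in $t$ and bounded on $[0,T]\times\mathbb{Z}$ for each $T>0$, such that $v$ is a subsolution and $w$ a supersolution of $$\frac{1}{\log K}\frac{d}{dt}n_i(t)=R(i\delta_K)n_i(t)+\sum_{l\in\mathbb{Z}}p((l+i)\delta_K)h_KG(lh_K)n_{l+i}(t),\quad t>0,\ i\in\mathbb{Z},$$ i.e. $v$ satisfies this with ''$\le$'' and $w$ with ''$\ge$'' in place of ''$=$''. If $v_i(0)\le w_i(0)$ for all $i$, then $v_i(t)\le w_i(t)$ for all $t\ge0$ and $i\in\mathbb{Z}$.
   Context: Let $R,p,G:\mathbb{R}\to\mathbb{R}$; $\delta_K>0$, $h_K:=\delta_K\log K$. (A1) $R,p$ Lipschitz with $\underline{R}\le R\le\overline{R}$, $0<\underline{p}\le p\le\overline{p}$. (A2) $G$ positive continuous, $\int G=1$, $G(x)=f(x)e^{-|x|}$ with $0<\min f\le f\le\sup f<\infty$. *)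

(* Defs.v *)
From Stdlib Require Import Reals ZArith.
From Coquelicot Require Import Coquelicot.
Open Scope R_scope.

(* Sum over l in Z of a : Z -> R, as sum_{l>=0} a l + sum_{k>=0} a (-(k+1)).
   (Coquelicot's Series; in the theorem all such series converge absolutely.) *)
Definition sumZ (a : Z -> R) : R :=
  Series (fun k : nat => a (Z.of_nat k)) +
  Series (fun k : nat => a (- Z.of_nat (S k))%Z).

Definition lipschitz (f : R -> R) : Prop :=
  exists L : R, forall x y : R, Rabs (f x - f y) <= L * Rabs (x - y).

Definition C1_nonneg (f : R -> R) : Prop :=
  exists df : R -> R,
    (forall t, 0 < t -> is_derive f t (df t)) /\
    filterlim (fun h => (f h - f 0) / h) (at_right 0) (locally (df 0)) /\
    (forall t, 0 <= t ->
       filterlim df (within (fun s => 0 <= s) (locally t)) (locally (df t))).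

Definition bounded_on_strips (n : Z -> R -> R) : Prop :=
  forall T : R, 0 < T -> exists M : R,
    forall (i : Z) (t : R), 0 <= t <= T -> Rabs (n i t) <= M.

Definition rhs (Rf p G : R -> R) (delta h : R) (n : Z -> R -> R) (i : Z) (t : R) : R :=
  Rf (IZR i * delta) * n i t +
  sumZ (fun l : Z => p (IZR (l + i) * delta) * h * G (IZR l * h) * n (l + i)%Z t).

(* Main.v *)
Require Import Defs.
From Stdlib Require Import Reals ZArith.
From Coquelicot Require Import Coquelicot.
From Stdlib Require Import Lra.
Open Scope R_scope.

Lemma Series_zero : Series (fun _ => 0) = 0.
Proof.
  transitivity (0 * Series (fun _ => 0)); [|ring].
  rewrite <- Series_scal_l. apply Series_ext. intros; ring.
Qed.

Lemma ser_le (d e : nat -> R) : ex_series d -> ex_series e ->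
  (forall n, d n <= e n) -> Series d <= Series e.
Proof.
  intros Hd He H.
  assert (0 <= Series (fun n => e n - d n)).
  { rewrite <- Series_zero. apply Series_le.
    - intros n; specialize (H n); lra.
    - apply (ex_series_minus e d He Hd). }
  rewrite Series_minus in H0 by assumption. lra.
Qed.

Lemma ex_ser_bd (c n q : nat -> R) B M :
  (forall k, 0 <= c k <= B * q k) -> (forall k, Rabs (n k) <= M) ->
  ex_series q -> ex_series (fun k => c k * n k).
Proof.
  intros Hc Hn Hq.
  apply (@ex_series_le R_AbsRing R_CompleteNormedModule _ (fun k => (B * q k) * M)).
  - intros k. change (norm (c k * n k)) with (Rabs (c k * n k)).
    rewrite Rabs_mult. specialize (Hc k). specialize (Hn k).
    rewrite (Rabs_pos_eq (c k)) by lra.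
    apply Rmult_le_compat; try lra; apply Rabs_pos.
  - apply ex_series_scal_r. apply (ex_series_scal_l B q Hq).
Qed.

Lemma nat_bound (c n1 n2 q : nat -> R) B M mu :
  (forall k, 0 <= c k <= B * q k) -> (forall k, Rabs (n1 k) <= M) ->
  (forall k, Rabs (n2 k) <= M) -> (forall k, n1 k - n2 k <= mu) -> 0 <= mu ->
  ex_series q ->
  Series (fun k => c k * n1 k) - Series (fun k => c k * n2 k) <= B * mu * Series q.
Proof.
  intros Hc H1 H2 H12 Hmu Hq.
  rewrite <- Series_minus by (eapply ex_ser_bd; eauto).
  rewrite <- Series_scal_l.
  apply ser_le.
  - apply (ex_series_minus (fun k => c k * n1 k) (fun k => c k * n2 k));
      eapply ex_ser_bd; eauto.
  - apply (ex_series_scal_l (B*mu) q Hq).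
  - intros k. specialize (Hc k). specialize (H12 k).
    replace (c k * n1 k - c k * n2 k) with (c k * (n1 k - n2 k)) by ring.
    apply Rle_trans with (c k * mu). apply Rmult_le_compat_l; lra.
    replace (B * mu * q k) with ((B * q k) * mu) by ring.
    apply Rmult_le_compat_r; lra.
Qed.

Lemma sumZ_bound (c n1 n2 : Z -> R) (q : nat -> R) B M mu :
  (forall l, 0 <= c l) -> (forall k, c (Z.of_nat k) <= B * q k) ->
  (forall k, c (- Z.of_nat (S k))%Z <= B * q k) -> ex_series q ->
  (forall l, Rabs (n1 l) <= M) -> (forall l, Rabs (n2 l) <= M) ->
  (forall l, n1 l - n2 l <= mu) -> 0 <= mu ->
  sumZ (fun l => c l * n1 l) - sumZ (fun l => c l * n2 l) <= 2 * B * mu * Series q.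
Proof.
  intros Hc0 Hp Hn Hq H1 H2 H12 Hmu. unfold sumZ.
  pose proof (nat_bound (fun k => c (Z.of_nat k)) (fun k => n1 (Z.of_nat k))
     (fun k => n2 (Z.of_nat k)) q B M mu) as A1.
  pose proof (nat_bound (fun k => c (- Z.of_nat (S k))%Z) (fun k => n1 (- Z.of_nat (S k))%Z)
     (fun k => n2 (- Z.of_nat (S k))%Z) q B M mu) as A2.

  assert (X1 := A1 (fun k => conj (Hc0 _) (Hp k)) (fun k => H1 _) (fun k => H2 _) (fun k => H12 _) Hmu Hq).
  assert (X2 := A2 (fun k => conj (Hc0 _) (Hn k)) (fun k => H1 _) (fun k => H2 _) (fun k => H12 _) Hmu Hq).
  lra.
Qed.

Lemma nonincr (phi dphi : R -> R) a b : a < b ->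
  (forall x, a < x <= b -> is_derive phi x (dphi x) /\ dphi x <= 0) ->
  filterlim phi (at_right a) (locally (phi a)) -> phi b <= phi a.
Proof.
  intros Hab Hd Hc.
  destruct (Rle_dec (phi b) (phi a)) as [|Hn]; [assumption|].
  apply Rnot_le_lt in Hn. exfalso.
  assert (Heta : 0 < phi b - phi a) by lra.
  apply (filterlim_locally (F := at_right a)) with (eps := mkposreal _ Heta) in Hc.
  destruct Hc as [d Hd'].
  set (x := a + Rmin d (b - a) / 2).
  assert (Hd0 := cond_pos d).
  assert (Hx1 : a < x). { unfold x. assert (0 < Rmin d (b-a)) by (apply Rmin_pos; lra). lra. }
  assert (Hx2 : x < b). { unfold x. assert (Rmin d (b-a) <= b - a) by apply Rmin_r.
     assert (0 < Rmin d (b-a)) by (apply Rmin_pos; lra). lra. }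
  assert (Hx3 : x - a < d). { unfold x. assert (Rmin d (b-a) <= d) by apply Rmin_l.
     assert (0 < Rmin d (b-a)) by (apply Rmin_pos; lra). lra. }
  assert (Hb : Rabs (phi x - phi a) < phi b - phi a).
  { apply (Hd' x); [| exact Hx1]. change (Rabs (x - a) < d). rewrite Rabs_pos_eq; lra. }
  destruct (MVT_gen phi x b dphi) as [c [Hc1 Hc2]].
  - intros y Hy. rewrite Rmin_left in Hy by lra. rewrite Rmax_right in Hy by lra.
    apply Hd; lra.
  - intros y Hy. rewrite Rmin_left in Hy by lra. rewrite Rmax_right in Hy by lra.
    apply continuity_pt_filterlim. apply (ex_derive_continuous (K := R_AbsRing) (V := R_NormedModule)).
    exists (dphi y). apply Hd; lra.
  - rewrite Rmin_left in Hc1 by lra. rewrite Rmax_right in Hc1 by lra.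
    assert (dphi c <= 0) by (apply Hd; lra).
    assert (dphi c * (b - x) <= 0).
    { apply Rmult_le_0_r; lra. }
    apply Rabs_def2 in Hb. lra.
Qed.

Lemma C1_rc (f : R -> R) t0 : C1_nonneg f -> 0 <= t0 ->
  filterlim f (at_right t0) (locally (f t0)).
Proof.
  intros [df [Hd [Hq _]]] Ht0.
  destruct (Rle_lt_or_eq_dec _ _ Ht0) as [Hp|He].
  - apply (@filterlim_filter_le_1 _ _ (locally t0) _ _ f).
    + apply filter_le_within; apply locally_filter.
    + assert (Hx : ex_derive f t0) by (exists (df t0); apply Hd; lra).
      exact (ex_derive_continuous (K := R_AbsRing) (V := R_NormedModule) f t0 Hx).
  - subst t0.
    apply filterlim_ext_loc with (f := fun x => plus (f 0) (mult x ((f x - f 0) / x))).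
    + exists (mkposreal 1 Rlt_0_1). intros y _ Hy. simpl in Hy.
      change (f 0 + y * ((f y - f 0) / y) = f y). field. lra.
    + assert (E : plus (f 0) (mult 0 (df 0)) = f 0).
      { change (f 0 + 0 * df 0 = f 0). ring. }
      apply (@filterlim_comp_2 _ _ _ _ _ (locally (f 0)) (locally (mult 0 (df 0))) _ _).
      * apply filterlim_const.
      * apply (@filterlim_comp_2 _ _ _ _ _ (locally 0) (locally (df 0)) _ _).
        -- apply (@filterlim_filter_le_1 _ _ (locally 0) _ _ (fun x => x)).
           ++ apply filter_le_within; apply locally_filter.
           ++ apply filterlim_id.
        -- exact Hq.
        -- apply (filterlim_mult (K := R_AbsRing)).
      * pose proof (filterlim_plus (K:=R_AbsRing) (V:=R_NormedModule) (f 0) (mult 0 (df 0))) as HP.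
        intros P HPl. apply HP. change (locally (f 0 + 0 * df 0) P).
        rewrite Rmult_0_l, Rplus_0_r. exact HPl.
Qed.

Lemma exp_le x y : x <= y -> exp x <= exp y.
Proof. intros [H|H]. left; apply exp_increasing; auto. subst; lra. Qed.

Lemma lim_minus (x y : R) : filterlim (fun z : R * R => fst z - snd z)
  (filter_prod (locally x) (locally y)) (locally (x - y)).
Proof.
  apply (@filterlim_comp_2 _ _ _ _ (filter_prod (locally x) (locally y)) (locally x) (locally (-y)) _ _
     (fun z : R * R => fst z) (fun z : R * R => - snd z) Rplus).
  - apply filterlim_fst.
  - apply (filterlim_comp _ _ _ (fun z : R * R => snd z) Ropp _ (locally y)).
    + apply filterlim_snd.
    + exact (filterlim_opp (K := R_AbsRing) (V := R_NormedModule) y).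
  - apply (filterlim_Rbar_plus x (- y) (x - y)). reflexivity.
Qed.

Lemma step (u du : Z -> R -> R) (a : Z -> R) A gc t0 d0 mu :
  0 <= t0 -> 0 < d0 -> 0 <= mu -> 0 <= A -> 0 <= gc ->
  (forall i, Rabs (a i) <= A) ->
  (forall i, filterlim (u i) (at_right t0) (locally (u i t0))) ->
  (forall i x, t0 < x <= t0 + d0 -> is_derive (u i) x (du i x)) ->
  (forall i x, t0 < x <= t0 + d0 -> (forall j, u j x <= mu) ->
       du i x <= a i * u i x + gc * mu) ->
  gc * d0 * exp (2 * A * d0) <= 1/2 ->
  (forall i, u i t0 <= 0) ->
  (forall i s, t0 <= s <= t0 + d0 -> u i s <= mu) ->
  forall i s, t0 <= s <= t0 + d0 -> u i s <= mu / 2.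
Proof.
  intros Ht0 Hd0 Hmu HA Hgc Ha Hrc Hder Hineq Hsmall H0 Hbd i s Hs.
  destruct (Rle_lt_or_eq_dec _ _ (proj1 Hs)) as [Hlt|Heq].
  2:{ subst s. specialize (H0 i). lra. }
  set (E := exp (A * d0)).
  set (ex := fun x => exp (- a i * (x - t0))).
  set (phi := fun x => ex x * u i x - gc * mu * E * (x - t0)).
  set (dphi := fun x => - a i * ex x * u i x + ex x * du i x - gc * mu * E).
  assert (Hex : forall x, is_derive ex x (- a i * ex x)).
  { intros x. unfold ex. auto_derive; [auto|]. rewrite Rmult_1_r. reflexivity. }
  assert (HexE : forall x, t0 <= x <= t0 + d0 -> ex x <= E).
  { intros x Hx. unfold ex, E. apply exp_le.
    specialize (Ha i). apply Rabs_le_between in Ha.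
    assert (- a i * (x - t0) <= A * (x - t0)) by (apply Rmult_le_compat_r; lra).
    assert (A * (x - t0) <= A * d0) by (apply Rmult_le_compat_l; lra). lra. }
  assert (Hexp : forall x, 0 < ex x) by (intros; apply exp_pos).
  assert (Hphi : phi s <= phi t0).
  { apply (nonincr phi dphi t0 s Hlt).
    - intros x Hx. split.
      + unfold phi.
        assert (H1 := is_derive_mult ex (u i) x _ _ (Hex x) (Hder i x ltac:(lra))
                         (fun n m => Rmult_comm n m)).
        assert (H2 : is_derive (fun x => gc * mu * E * (x - t0)) x (gc * mu * E)).
        { auto_derive; [auto| ring]. }
        assert (H3 := is_derive_minus _ _ x _ _ H1 H2).
        unfold dphi. simpl in H3.
        replace (- a i * ex x * u i x + ex x * du i x - gc * mu * E)
          with (minus (plus (mult (- a i * ex x) (u i x)) (mult (ex x) (du i x))) (gc * mu * E)).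
        exact H3.
        change (- a i * ex x * u i x + ex x * du i x + - (gc * mu * E) =
                - a i * ex x * u i x + ex x * du i x - gc * mu * E). ring.
      + unfold dphi.
        assert (Hin : du i x <= a i * u i x + gc * mu).
        { apply Hineq; [lra|]. intros j. apply Hbd. lra. }
        assert (ex x * (du i x - a i * u i x) <= ex x * (gc * mu)).
        { apply Rmult_le_compat_l. left; auto. lra. }
        assert (ex x * (gc * mu) <= E * (gc * mu)).
        { apply Rmult_le_compat_r. apply Rmult_le_pos; lra. apply HexE; lra. }
        nra.
    - unfold phi.
      apply (@filterlim_comp_2 _ _ _ _ _ (locally (ex t0 * u i t0)) (locally (gc * mu * E * (t0 - t0))) _ _).
      + apply (@filterlim_comp_2 _ _ _ _ _ (locally (ex t0)) (locally (u i t0)) _ _).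
        * apply (@filterlim_filter_le_1 _ _ (locally t0) _ _ ex).
          -- apply filter_le_within; apply locally_filter.
          -- assert (Hx : ex_derive ex t0) by (eexists; apply Hex).
             exact (ex_derive_continuous (K := R_AbsRing) (V := R_NormedModule) ex t0 Hx).
        * apply Hrc.
        * exact (filterlim_mult (K := R_AbsRing) (ex t0) (u i t0)).
      + apply (@filterlim_filter_le_1 _ _ (locally t0) _ _ (fun x => gc * mu * E * (x - t0))).
        -- apply filter_le_within; apply locally_filter.
        -- assert (Hx : ex_derive (fun x => gc * mu * E * (x - t0)) t0) by (auto_derive; auto).
           exact (ex_derive_continuous (K := R_AbsRing) (V := R_NormedModule) _ t0 Hx).
      + apply lim_minus.
  }
  unfold phi in Hphi.
  assert (ex t0 = 1) by (unfold ex; rewrite Rminus_diag, Rmult_0_r; apply exp_0).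
  rewrite H, Rminus_diag, Rmult_0_r in Hphi.
  specialize (H0 i).
  assert (Hk : ex s * u i s <= gc * mu * E * d0).
  { assert (gc * mu * E * (s - t0) <= gc * mu * E * d0).
    { apply Rmult_le_compat_l. apply Rmult_le_pos. apply Rmult_le_pos; lra.
      unfold E; left; apply exp_pos. lra. }
    lra. }
  assert (Hinv : exp (a i * (s - t0)) * ex s = 1).
  { unfold ex. rewrite <- exp_plus. replace (a i * (s - t0) + - a i * (s - t0)) with 0 by ring.
    apply exp_0. }
  assert (HE2 : exp (a i * (s - t0)) <= E).
  { unfold E. apply exp_le. specialize (Ha i). apply Rabs_le_between in Ha.
    assert (a i * (s - t0) <= A * (s - t0)) by (apply Rmult_le_compat_r; lra).
    assert (A * (s - t0) <= A * d0) by (apply Rmult_le_compat_l; lra). lra. }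
  assert (HEE : E * E = exp (2 * A * d0)).
  { unfold E. rewrite <- exp_plus. f_equal. ring. }
  assert (Hu : u i s = exp (a i * (s - t0)) * (ex s * u i s)).
  { rewrite <- Rmult_assoc, Hinv. ring. }
  assert (HE0 : 0 < E) by apply exp_pos.
  assert (0 <= gc * mu * E * d0).
  { repeat apply Rmult_le_pos; lra. }
  assert (u i s <= E * (gc * mu * E * d0)).
  { rewrite Hu. destruct (Rle_dec 0 (ex s * u i s)).
    - apply Rmult_le_compat; try lra. left; apply exp_pos.
    - assert (exp (a i * (s - t0)) * (ex s * u i s) <= 0).
      { assert (0 < exp (a i * (s - t0))) by apply exp_pos.
        assert (ex s * u i s <= 0) by lra. nra. }
      assert (0 <= E * (gc * mu * E * d0)) by (apply Rmult_le_pos; lra). lra. }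
  assert (E * (gc * mu * E * d0) = mu * (gc * d0 * exp (2 * A * d0))).
  { rewrite <- HEE. ring. }
  assert (mu * (gc * d0 * exp (2 * A * d0)) <= mu * (1/2)) by (apply Rmult_le_compat_l; lra).
  lra.
Qed.

Lemma pow2_ge n : INR n <= 2 ^ n.
Proof.
  induction n. simpl; lra. rewrite S_INR. simpl.
  assert (1 <= 2 ^ n) by (apply pow_R1_Rle; lra). lra.
Qed.

Lemma interval_zero (u du : Z -> R -> R) (a : Z -> R) A gc t0 d0 M :
  0 <= t0 -> 0 < d0 -> 0 <= A -> 0 <= gc -> 0 <= M ->
  (forall i, Rabs (a i) <= A) ->
  (forall i, filterlim (u i) (at_right t0) (locally (u i t0))) ->
  (forall i x, t0 < x <= t0 + d0 -> is_derive (u i) x (du i x)) ->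
  (forall i x mu, 0 <= mu -> t0 < x <= t0 + d0 -> (forall j, u j x <= mu) ->
       du i x <= a i * u i x + gc * mu) ->
  gc * d0 * exp (2 * A * d0) <= 1/2 ->
  (forall i, u i t0 <= 0) ->
  (forall i s, t0 <= s <= t0 + d0 -> u i s <= M) ->
  forall i s, t0 <= s <= t0 + d0 -> u i s <= 0.
Proof.
  intros Ht0 Hd0 HA Hgc HM Ha Hrc Hder Hineq Hsmall H0 Hbd.
  assert (Hn : forall n, forall i s, t0 <= s <= t0 + d0 -> u i s <= M / 2 ^ n).
  { induction n.
    - simpl. intros. rewrite Rdiv_1_r. auto.
    - intros i s Hs.
      replace (M / 2 ^ S n) with (M / 2 ^ n / 2) by (simpl; field; apply pow_nonzero; lra).
      assert (0 < 2 ^ n) by (apply pow_lt; lra).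
      apply (step u du a A gc t0 d0 (M / 2 ^ n)); auto.
      + apply Rdiv_le_0_compat; lra.
      + intros. apply Hineq; auto. apply Rdiv_le_0_compat; lra. }
  intros i s Hs.
  destruct (Rle_dec (u i s) 0) as [|Hp]; auto. apply Rnot_le_lt in Hp. exfalso.
  destruct (archimed (M / u i s)) as [Hup _].
  assert (Hz : (0 <= up (M / u i s))%Z).
  { apply le_IZR. assert (0 <= M / u i s) by (apply Rdiv_le_0_compat; lra). lra. }
  destruct (IZN _ Hz) as [n Hnz].
  rewrite Hnz, <- INR_IZR_INZ in Hup.
  specialize (Hn n i s Hs). assert (H2 := pow2_ge n).
  assert (0 < 2 ^ n) by (apply pow_lt; lra).
  assert (M / u i s < 2 ^ n) by lra.
  apply Rmult_le_compat_r with (r := 2 ^ n) in Hn; [|lra].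
  replace (M / 2 ^ n * 2 ^ n) with M in Hn by (field; lra).
  assert (M < 2 ^ n * u i s).
  { apply (Rmult_lt_compat_r (u i s)) in H1; auto.
    replace (M / u i s * u i s) with M in H1 by (field; lra). lra. }
  lra.
Qed.

Lemma global (u du : Z -> R -> R) (a : Z -> R) A gc d0 :
  0 < d0 -> 0 <= A -> 0 <= gc ->
  (forall i, Rabs (a i) <= A) ->
  (forall i t0, 0 <= t0 -> filterlim (u i) (at_right t0) (locally (u i t0))) ->
  (forall i x, 0 < x -> is_derive (u i) x (du i x)) ->
  (forall i x mu, 0 <= mu -> 0 < x -> (forall j, u j x <= mu) ->
       du i x <= a i * u i x + gc * mu) ->
  gc * d0 * exp (2 * A * d0) <= 1/2 ->
  (forall i, u i 0 <= 0) ->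
  (forall T, 0 < T -> exists M, forall i t, 0 <= t <= T -> u i t <= M) ->
  forall t i, 0 <= t -> u i t <= 0.
Proof.
  intros Hd0 HA Hgc Ha Hrc Hder Hineq Hsmall H0 Hbd.
  assert (HN : forall N : nat, forall i s, 0 <= s <= INR N * d0 -> u i s <= 0).
  { induction N.
    - intros i s Hs. simpl in Hs. replace s with 0 by lra. auto.
    - intros i s Hs. rewrite S_INR in Hs.
      destruct (Rle_dec s (INR N * d0)) as [Hle|Hgt].
      + apply IHN. lra.
      + assert (HNp := pos_INR N).
        assert (0 <= INR N * d0) by (apply Rmult_le_pos; lra).
        destruct (Hbd ((INR N + 1) * d0)) as [M HM].
        { apply Rmult_lt_0_compat; lra. }
        apply (interval_zero u du a A gc (INR N * d0) d0 (Rmax 0 M)); auto.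
        * apply Rmax_l.
        * intros j x Hx. apply Hder. lra.
        * intros j x mu Hmu Hx Hj. apply Hineq; auto. lra.
        * intros j. apply IHN. lra.
        * intros j s' Hs'. apply Rle_trans with M; [|apply Rmax_r]. apply HM. lra.
        * lra. }
  intros t i Ht.
  destruct (archimed (t / d0)) as [Hup _].
  assert (Hz : (0 <= up (t / d0))%Z).
  { apply le_IZR. assert (0 <= t / d0) by (apply Rdiv_le_0_compat; lra). lra. }
  destruct (IZN _ Hz) as [n Hnz].
  rewrite Hnz, <- INR_IZR_INZ in Hup.
  apply (HN n). split; auto.
  apply Rmult_lt_compat_r with (r := d0) in Hup; auto.
  replace (t / d0 * d0) with t in Hup by (field; lra). lra.
Qed.

Lemma exp_pow_neg h k : exp (- h) ^ k = exp (- (INR k * h)).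
Proof.
  induction k. simpl. rewrite Rmult_0_l, Ropp_0, exp_0. reflexivity.
  simpl pow. rewrite IHk, <- exp_plus, S_INR. f_equal. ring.
Qed.

Theorem proposition3p3
  (Rf p G : R -> R) (deltaK K : R) (v w : Z -> R -> R)
  (* (A1) *)
  (HRlip : lipschitz Rf) (Hplip : lipschitz p)
  (HRbd : exists Rlo Rhi : R, forall x, Rlo <= Rf x <= Rhi)
  (Hpbd : exists plo phi : R, 0 < plo /\ forall x, plo <= p x <= phi)
  (* (A2) *)
  (HGpos : forall x, 0 < G x) (HGcont : forall x, continuous G x)
  (HGint : is_RInt_gen G (Rbar_locally m_infty) (Rbar_locally p_infty) 1)
  (HGf : exists (f : R -> R) (fmin fsup : R), 0 < fmin /\
           (forall x, fmin <= f x <= fsup) /\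
           (forall x, G x = f x * exp (- Rabs x)))
  (Hdelta : 0 < deltaK) (HK : 1 <= K)
  (Hv1 : forall i, C1_nonneg (v i)) (Hw1 : forall i, C1_nonneg (w i))
  (Hvb : bounded_on_strips v) (Hwb : bounded_on_strips w)
  (Hsub : forall (i : Z) (t : R), 0 < t ->
     Derive (v i) t <= ln K * rhs Rf p G deltaK (deltaK * ln K) v i t)
  (Hsuper : forall (i : Z) (t : R), 0 < t ->
     Derive (w i) t >= ln K * rhs Rf p G deltaK (deltaK * ln K) w i t)
  (H0 : forall i, v i 0 <= w i 0) :
  forall (t : R) (i : Z), 0 <= t -> v i t <= w i t.
Proof.
  destruct HRbd as [Rlo [Rhi HR]].
  destruct Hpbd as [plo [phi [Hplo Hp]]].
  destruct HGf as [f [fmin [fsup [Hfmin [Hf HGe]]]]].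
  set (lam := ln K).
  assert (Hlam : 0 <= lam) by (unfold lam; rewrite <- ln_1; apply ln_le; lra).
  set (h := deltaK * lam).
  assert (Hh : 0 <= h) by (unfold h; apply Rmult_le_pos; lra).
  set (A := lam * (Rabs Rlo + Rabs Rhi)).
  assert (HA : 0 <= A) by (unfold A; apply Rmult_le_pos; [lra|];
     assert (0 <= Rabs Rlo) by apply Rabs_pos; assert (0 <= Rabs Rhi) by apply Rabs_pos; lra).
  set (a := fun i : Z => lam * Rf (IZR i * deltaK)).
  assert (Ha : forall i, Rabs (a i) <= A).
  { intros i. unfold a, A. rewrite Rabs_mult, (Rabs_pos_eq lam) by lra.
    apply Rmult_le_compat_l; [lra|]. apply Rabs_le.
    specialize (HR (IZR i * deltaK)).
    assert (- Rlo <= Rabs Rlo) by (rewrite <- Rabs_Ropp; apply Rle_abs).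
    assert (Rhi <= Rabs Rhi) by apply Rle_abs.
    assert (0 <= Rabs Rlo) by apply Rabs_pos; assert (0 <= Rabs Rhi) by apply Rabs_pos.
    lra. }
  set (q := fun k : nat => h * exp (- h) ^ k).
  assert (Hq : ex_series q).
  { destruct (Rle_lt_or_eq_dec _ _ Hh) as [Hhp|Hh0].
    - apply (ex_series_scal_l (V := R_NormedModule) h (fun k => exp (- h) ^ k)).
      apply ex_series_geom. rewrite Rabs_pos_eq by (left; apply exp_pos).
      rewrite <- exp_0. apply exp_increasing. lra.
    - apply (ex_series_ext (V := R_NormedModule) (fun k => h * (/2) ^ k)).
      + intros k. unfold q. change (h * (/2) ^ k = h * exp (- h) ^ k). rewrite <- Hh0. ring.
      + apply (ex_series_scal_l (V := R_NormedModule) h (fun k => (/2) ^ k)).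
        apply ex_series_geom. rewrite Rabs_pos_eq; lra. }
  assert (Hq0 : forall k, 0 <= q k).
  { intros k. unfold q. apply Rmult_le_pos; auto. apply pow_le. left; apply exp_pos. }
  set (Sq := Series q).
  assert (HSq : 0 <= Sq).
  { unfold Sq. rewrite <- Series_zero. apply Series_le; auto. intros; split; auto; lra. }
  assert (Hphi : 0 < phi) by (specialize (Hp 0); lra).
  assert (Hfsup : 0 < fsup) by (specialize (Hf 0); lra).
  set (B := phi * fsup).
  assert (HB : 0 <= B) by (unfold B; apply Rmult_le_pos; lra).
  set (gc := lam * (2 * B * Sq)).
  assert (Hgc : 0 <= gc) by (unfold gc; apply Rmult_le_pos; [lra|];
      apply Rmult_le_pos; [|lra]; lra).
  set (X := gc * exp (2 * A)).
  assert (HX : 0 <= X) by (unfold X; apply Rmult_le_pos; [lra| left; apply exp_pos]).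
  set (d0 := 1 / (1 + 2 * X)).
  assert (Hd0 : 0 < d0) by (unfold d0; apply Rdiv_lt_0_compat; lra).
  assert (Hd01 : d0 <= 1) by (unfold d0; apply Rmult_le_reg_r with (1 + 2 * X); [lra|];
      unfold Rdiv; rewrite Rmult_assoc, Rinv_l by lra; lra).
  assert (Hsmall : gc * d0 * exp (2 * A * d0) <= 1 / 2).
  { assert (exp (2 * A * d0) <= exp (2 * A)).
    { apply exp_le. assert (A * d0 <= A * 1) by (apply Rmult_le_compat_l; lra). lra. }
    apply Rle_trans with (gc * d0 * exp (2 * A)).
    { apply Rmult_le_compat_l; auto. apply Rmult_le_pos; lra. }
    replace (gc * d0 * exp (2 * A)) with (X / (1 + 2 * X)).
    2:{ unfold d0. unfold Rdiv. rewrite Rmult_1_l. unfold X. ring. }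
    apply Rmult_le_reg_r with (1 + 2 * X); [lra|].
    unfold Rdiv; rewrite Rmult_assoc, Rinv_l by lra; lra. }
  assert (HG : forall y r, r <= Rabs y -> G y <= fsup * exp (- r)).
  { intros y r Hr. rewrite HGe. apply Rmult_le_compat.
    - specialize (Hf y); lra.
    - left; apply exp_pos.
    - apply Hf.
    - apply exp_le. lra. }
  set (u := fun i t => v i t - w i t).
  set (du := fun i t => Derive (v i) t - Derive (w i) t).
  intros t i Ht.
  cut (u i t <= 0). { unfold u. lra. }
  apply (global u du a A gc d0); auto.
  -
    intros j t0 Ht0. unfold u.
    apply (@filterlim_comp_2 _ _ _ _ _ (locally (v j t0)) (locally (w j t0)) _ _).
    + apply C1_rc; auto.
    + apply C1_rc; auto.
    + apply lim_minus.
  -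
    intros j x Hx. unfold u, du.
    destruct (Hv1 j) as [dv [Hdv _]]. destruct (Hw1 j) as [dw [Hdw _]].
    rewrite (is_derive_unique _ _ _ (Hdv x Hx)), (is_derive_unique _ _ _ (Hdw x Hx)).
    exact (is_derive_minus (V := R_NormedModule) _ _ x _ _ (Hdv x Hx) (Hdw x Hx)).
  -
    intros j x mu Hmu Hx Hj.
    destruct (Hvb (x + 1)) as [Mv HMv]; [lra|].
    destruct (Hwb (x + 1)) as [Mw HMw]; [lra|].
    set (c := fun l : Z => p (IZR (l + j) * deltaK) * h * G (IZR l * h)).
    assert (Hc0 : forall l, 0 <= c l).
    { intros l. unfold c. apply Rmult_le_pos. apply Rmult_le_pos; auto.
      specialize (Hp (IZR (l + j) * deltaK)); lra. left; apply HGpos. }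
    assert (Hcb : forall k (l : Z), INR k * h <= Rabs (IZR l * h) -> c l <= B * q k).
    { intros k l Hl. unfold c, B, q.
      assert (HG' := HG _ _ Hl). rewrite <- exp_pow_neg in HG'.
      specialize (Hp (IZR (l + j) * deltaK)).
      assert (0 <= G (IZR l * h)) by (left; apply HGpos).
      assert (p (IZR (l + j) * deltaK) * h * G (IZR l * h) <= phi * h * (fsup * exp (- h) ^ k)).
      { apply Rmult_le_compat; auto. apply Rmult_le_pos; lra.
        apply Rmult_le_compat_r; lra. }
      lra. }
    assert (Hsum := sumZ_bound c (fun l => v (l + j)%Z x) (fun l => w (l + j)%Z x) q B
                     (Rmax Mv Mw) mu Hc0).
    assert (HS : sumZ (fun l => c l * v (l + j)%Z x) - sumZ (fun l => c l * w (l + j)%Z x)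
                 <= 2 * B * mu * Sq).
    { apply Hsum; auto.
      - intros k. apply Hcb. rewrite <- INR_IZR_INZ, Rabs_mult, (Rabs_pos_eq h) by auto.
        rewrite Rabs_pos_eq by apply pos_INR. lra.
      - intros k. apply Hcb. rewrite opp_IZR, <- INR_IZR_INZ, Rabs_mult, (Rabs_pos_eq h) by auto.
        rewrite Rabs_Ropp, Rabs_pos_eq by apply pos_INR. rewrite S_INR.
        assert (0 <= h) by auto. nra.
      - intros l. apply Rle_trans with Mv; [|apply Rmax_l]. apply HMv. lra.
      - intros l. apply Rle_trans with Mw; [|apply Rmax_r]. apply HMw. lra.
      - intros l. apply Hj. }
    specialize (Hsub j x Hx). specialize (Hsuper j x Hx).
    unfold rhs in Hsub, Hsuper. fold lam in Hsub, Hsuper. fold h in Hsub, Hsuper.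
    change (fun l : Z => p (IZR (l + j) * deltaK) * h * G (IZR l * h) * v (l + j)%Z x)
      with (fun l : Z => c l * v (l + j)%Z x) in Hsub.
    change (fun l : Z => p (IZR (l + j) * deltaK) * h * G (IZR l * h) * w (l + j)%Z x)
      with (fun l : Z => c l * w (l + j)%Z x) in Hsuper.
    unfold du, u, a, gc. fold Sq.
    assert (lam * (sumZ (fun l => c l * v (l + j)%Z x) - sumZ (fun l => c l * w (l + j)%Z x))
            <= lam * (2 * B * mu * Sq)) by (apply Rmult_le_compat_l; auto).
    nra.
  - intros j. unfold u. specialize (H0 j). lra.
  - intros T HT. destruct (Hvb T HT) as [Mv HMv]. destruct (Hwb T HT) as [Mw HMw].
    exists (Mv + Mw). intros j s Hs. unfold u.
    specialize (HMv j s Hs). specialize (HMw j s Hs).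
    apply Rabs_le_between in HMv. apply Rabs_le_between in HMw. lra.
Qed.
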